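(* Let $\mathsf G=(\mathsf V,\mathsf E)$ be a finite connected graph without loops or multiple edges, with discrete Laplacian $\mathcal L=\mathcal I\mathcal I^T$. Then the semigroup $(e^{-t\mathcal L^2})_{t\ge0}$ is eventually irreducible: there exists $t_0>0$ such that for all $t\ge t_0$ and all $f\in\mathbb R^V$ with $f\ge0$, $f\ne0$, every entry of $e^{-t\mathcal L^2}f$ is strictly positive.
   Context: $V=|\mathsf V|$. After fixing an arbitrary orientation of the edges, the incidence matrix $\mathcal I\in\mathbb R^{V\times E}$ has entries $\iota_{\mathsf v\mathsf e}=-1$ if $\mathsf v$ is the initial endpoint of $\mathsf e$, $+1$ if $\mathsf v$ is the terminal endpoint of $\mathsf e$, and $0$ otherwise; $\mathcal L=\mathcal I\mathcal I^T$. *)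

(* Defs.v *)
From HB Require Import structures.
From mathcomp Require Import all_boot all_order all_algebra.
From mathcomp Require Import all_classical all_reals all_analysis.
Set Implicit Arguments. Unset Strict Implicit. Unset Printing Implicit Defensive.
Import Order.TTheory GRing.Theory Num.Theory.
Local Open Scope ring_scope.

(* Vertices are 'I_n, edges are 'I_m; edge e is oriented from src e to tgt e. *)

Definition incidence (R : nzRingType) (n m : nat) (src tgt : 'I_m -> 'I_n)
  : 'M[R]_(n, m) :=
  \matrix_(v, e) (if v == src e then -1 else if v == tgt e then 1 else 0).

Definition laplacian (R : nzRingType) (n m : nat) (src tgt : 'I_m -> 'I_n)
  : 'M[R]_n :=
  incidence R src tgt *m (incidence R src tgt)^T.

Definition adjacent (n m : nat) (src tgt : 'I_m -> 'I_n) : rel 'I_n :=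
  fun x y => [exists e, ((src e == x) && (tgt e == y)) || ((src e == y) && (tgt e == x))].

Definition simple_graph (n m : nat) (src tgt : 'I_m -> 'I_n) : Prop :=
  (forall e, src e != tgt e) /\
  (forall e e', [set src e; tgt e] = [set src e'; tgt e'] -> e = e').

Definition connected_graph (n m : nat) (src tgt : 'I_m -> 'I_n) : Prop :=
  forall x y, connect (adjacent src tgt) x y.

Definition mxexp (R : realType) (n : nat) (A : 'M[R]_n) : 'M[R]_n :=
  lim ((fun N : nat => \sum_(k < N) ((k`!)%:R)^-1 *: A ^+ k) @ \oo)%classic.

(* Main.v *)
From Pilot Require Import Defs.
From HB Require Import structures.
From mathcomp Require Import all_boot all_order all_algebra.
From mathcomp Require Import all_classical all_reals all_analysis.
From mathcomp Require Import complex.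
From mathcomp Require Import ring lra.
Import Order.TTheory GRing.Theory Num.Theory.
Import numFieldNormedType.Exports.
Set Implicit Arguments. Unset Strict Implicit. Unset Printing Implicit Defensive.
Local Open Scope ring_scope.

Lemma sym_spectral (R : realType) (n : nat) (L : 'M[R]_n) : L^T = L ->
  exists mu : 'I_n -> R, exists W : 'I_n -> 'M[R]_n,
    forall k, L ^+ k = \sum_l (mu l ^+ k) *: W l.
Proof.
move=> Lsym.
pose f := real_complex R.
pose Lc := map_mx f L.
have herm : Lc \is hermsymmx.
  apply/is_hermitianmxP; rewrite expr0 scale1r.
  apply/matrixP => i j; rewrite !mxE.
  rewrite conj_Creal; last by apply/complex_realP; eexists.
  by rewrite -[in LHS]Lsym mxE.
have /orthomx_spectralP Lc_eq := hermitian_normalmx herm.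
have dreal := hermitian_spectral_diag_real herm.
set P := spectralmx Lc in Lc_eq.
set d := spectral_diag Lc in Lc_eq dreal.
have Pu : P \in unitmx by exact: spectral_unit.
have powk : forall k, Lc ^+ k = invmx P *m diag_mx (\row_j (d 0 j ^+ k)) *m P.
  elim=> [|k IH].
    rewrite expr0.
    have -> : \row_j (d 0 j ^+ 0) = const_mx 1 by apply/rowP => j; rewrite !mxE expr0.
    by rewrite diag_const_mx mulmx1 mulVmx.
  rewrite exprSr IH [X in _ * X]Lc_eq -mulmxE.
  rewrite -!mulmxA; congr (_ *m _); rewrite !mulmxA mulmxK // mulmx_diag.
  congr (diag_mx _ *m _); apply/rowP => j; rewrite !mxE exprSr.
  done.
exists (fun l => complex.Re (d 0 l)).
exists (fun l => \matrix_(i, j) complex.Re (invmx P i l * P l j)).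
move=> k; apply/matrixP => i j.
have : map_mx f (L ^+ k) = Lc ^+ k by rewrite rmorphXn.
rewrite powk => /matrixP /(_ i j).
rewrite !mxE summxE => /(congr1 (@complex.Re R)) /= ->.
rewrite mul_mx_diag.
have ReD : forall x y : R[i], complex.Re (x + y) = complex.Re x + complex.Re y.
  by move=> [a b] [c e].
have ReM : forall (z : R[i]) (r : R), complex.Re (z * r%:C)%C = complex.Re z * r.
  by move=> [a b] r /=; rewrite mulr0 subr0.
rewrite (big_morph (@complex.Re R) ReD (erefl _)).
apply: eq_bigr => a _; rewrite !mxE.
have -> : d 0 a = (complex.Re (d 0 a))%:C%C.
  by rewrite RRe_real //; apply: (mxOverP dreal).
have XC : forall (r : R) m, ((r%:C) ^+ m = (r ^+ m)%:C)%C.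
  move=> r; elim=> [|m IHm] //; rewrite !exprS IHm.
  by apply/eqP; rewrite eq_complex /= !mulr0 !mul0r subr0 addr0 !eqxx.
rewrite XC mulrAC ReM mulrC /=.
by [].
Qed.
Lemma mxexp_spec (R : realType) (n : nat) (A : 'M[R]_n) (lam : 'I_n -> R)
  (W : 'I_n -> 'M[R]_n) :
  (forall k, A ^+ k = \sum_l (lam l ^+ k) *: W l) ->
  mxexp A = \sum_l expR (lam l) *: W l.
Proof.
move=> HA; rewrite /mxexp.
set S := \sum_l _.
suff H : ((fun N : nat => \sum_(k < N) (k`!%:R)^-1 *: A ^+ k) @ \oo --> (S : 'M[R]_n))%classic.
  refine (@cvg_lim _ (@norm_hausdorff R _) _ _ _ _ _ H).
have -> : (fun N : nat => \sum_(k < N) (k`!%:R)^-1 *: A ^+ k) =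
          (fun N => \sum_l series (exp_coeff (lam l)) N *: W l).
  apply/funext => N.
  under eq_bigr do rewrite HA scaler_sumr.
  rewrite exchange_big /=; apply: eq_bigr => l _.
  rewrite /series /= big_mkord scaler_suml; apply: eq_bigr => k _.
  by rewrite scalerA /exp_coeff /= mulrC.
apply: (cvg_big (@pseudometric_normed_Zmodule.add_continuous R _)) => // l _.
have := @cvgZr_tmp R _ nat \oo%classic _ (series (exp_coeff (lam l))) (expR (lam l)) (W l).
apply; exact: is_cvg_series_exp_coeff.
Qed.
Lemma sq0 (R : realType) (p : nat) (y : 'cV[R]_p) : (y^T *m y) 0 0 = 0 -> y = 0.
Proof.
rewrite !mxE => H; apply/matrixP => a b; rewrite ord1 mxE.
have H2 : \sum_i y i 0 ^+ 2 = 0.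
  by rewrite -[RHS]H; apply: eq_bigr => i _; rewrite mxE expr2.
have /eqP := @psumr_eq0P _ _ _ _ (fun i _ => sqr_ge0 (y i 0)) H2 a isT.
by rewrite sqrf_eq0 => /eqP.
Qed.

Lemma inc_col (R : realType) (n m : nat) (src tgt : 'I_m -> 'I_n) (g : 'I_n -> R) e :
  src e != tgt e ->
  \sum_v incidence R src tgt v e * g v = g (tgt e) - g (src e).
Proof.
move=> ne.
rewrite (bigD1 (src e)) //= mxE eqxx (bigD1 (tgt e)) /=; last by rewrite eq_sym.
have ne' : tgt e != src e by rewrite eq_sym.
rewrite mxE (negbTE ne') eqxx big1 ?addr0.
  by rewrite mulN1r mul1r addrC.
move=> v /andP[vs vt]; rewrite mxE (negbTE vs) (negbTE vt) mul0r //.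
Qed.

Lemma lap_sym (R : realType) (n m : nat) (src tgt : 'I_m -> 'I_n) :
  (laplacian R src tgt)^T = laplacian R src tgt.
Proof. by rewrite /laplacian trmx_mul trmxK. Qed.

Lemma lap_ker (R : realType) (n m : nat) (src tgt : 'I_m -> 'I_n) (x : 'cV[R]_n) :
  (forall e, src e != tgt e) -> connected_graph src tgt ->
  laplacian R src tgt *m laplacian R src tgt *m x = 0 ->
  forall a b, x a 0 = x b 0.
Proof.
move=> noloop conn Mx.
set I := incidence R src tgt.
set L := laplacian R src tgt in Mx *.
have Lx : L *m x = 0.
  apply: sq0; rewrite trmx_mul lap_sym -mulmxA [L *m (L *m x)]mulmxA.
  by rewrite Mx mulmx0 mxE.
have Ix : I^T *m x = 0.
  apply: sq0; rewrite trmx_mul trmxK -mulmxA [I *m (I^T *m x)]mulmxA.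
  by rewrite -/(laplacian R src tgt) -/L Lx mulmx0 mxE.
have adj : forall u v, Pilot.Defs.adjacent src tgt u v -> x u 0 = x v 0.
  have Ee : forall e, x (tgt e) 0 - x (src e) 0 = 0.
    move=> e; rewrite -(inc_col (fun v => x v 0) (noloop e)).
    have := congr1 (fun A : 'M[R]_(m,1) => A e 0) Ix; rewrite !mxE => H; rewrite -[RHS]H.
    by apply: eq_bigr => v _; rewrite [I^T _ _]mxE.
  move=> u v /existsP [e /orP [/andP [/eqP <- /eqP <-] | /andP [/eqP <- /eqP <-]]].
    by apply/eqP; rewrite eq_sym -subr_eq0 Ee.
  by apply/eqP; rewrite -subr_eq0 Ee.
move=> a b; have /connectP [p pth ->] := conn a b.
elim: p a pth => [|c p IH] a //= /andP [ac pth].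
by rewrite (adj _ _ ac); exact: IH.
Qed.
Lemma prod_id (R : realType) (n : nat) (M : 'M[R]_n) (lam : 'I_n -> R)
  (W : 'I_n -> 'M[R]_n) (J : Type) (c : J -> R) (s : seq J) :
  (forall k, M ^+ k = \sum_j (lam j ^+ k) *: W j) ->
  forall k, M ^+ k * \prod_(l <- s) (1 - c l *: M) =
    \sum_j (lam j ^+ k * \prod_(l <- s) (1 - c l * lam j)) *: W j.
Proof.
move=> HM; elim: s => [|a s IH] k.
  rewrite big_nil mulr1 HM; apply: eq_bigr => j _; by rewrite big_nil mulr1.
have e1 : M ^+ k * (c a *: M) = c a *: M ^+ k.+1.
  by rewrite exprSr -!mulmxE -scalemxAr.
have e2 : forall (X Y : 'M[R]_n) (r : R), (r *: X) * Y = r *: (X * Y).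
  by move=> X Y r; rewrite -!mulmxE -scalemxAl.
rewrite big_cons mulrA mulrBr mulr1 e1 mulrBl e2 !IH.
rewrite scaler_sumr -sumrB; apply: eq_bigr => j _.
rewrite big_cons scalerA -scalerBl; congr (_ *: _); rewrite exprSr; ring.
Qed.

Lemma prod_comm (R : realType) (n : nat) (M : 'M[R]_n) (J : Type) (c : J -> R) (s : seq J) :
  GRing.comm M (\prod_(l <- s) (1 - c l *: M)).
Proof.
apply: commr_prod => l _.
rewrite /GRing.comm mulrBr mulrBl mul1r mulr1 -!mulmxE.
by rewrite -scalemxAr -scalemxAl.
Qed.

Lemma prod_fix (R : realType) (n : nat) (M : 'M[R]_n) (v : 'cV[R]_n) (J : Type) (c : J -> R) (s : seq J) :
  M *m v = 0 -> (\prod_(l <- s) (1 - c l *: M)) *m v = v.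
Proof.
move=> Mv; elim: s => [|a s IH].
  by rewrite big_nil mul1mx.
rewrite big_cons -mulmxE -mulmxA IH mulmxBl mul1mx -scalemxAl Mv scaler0 subr0.
done.
Qed.

Lemma le_sum1 (R : realType) (k : nat) (F : 'I_k -> R) a :
  (forall j, 0 <= F j) -> F a <= \sum_j F j.
Proof.
move=> F0; rewrite (bigD1 a) //= lerDl; apply: sumr_ge0 => j _; exact: F0.
Qed.

Lemma exprZmx (R : realType) (n : nat) (a : R) (A : 'M[R]_n) k :
  (a *: A) ^+ k = a ^+ k *: A ^+ k.
Proof.
elim: k => [|k IH]; first by rewrite !expr0 scale1r.
by rewrite !exprS IH -!mulmxE -scalemxAl -scalemxAr scalerA.
Qed.

Theorem proposition6p1 (R : realType) (n m : nat) (src tgt : 'I_m -> 'I_n) :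
  simple_graph src tgt ->
  connected_graph src tgt ->
  exists t0 : R, 0 < t0 /\
    forall t : R, t0 <= t ->
    forall f : 'cV[R]_n,
      (forall i, 0 <= f i ord0) -> f != 0 ->
      forall i, 0 < (mxexp (- t *: (laplacian R src tgt *m laplacian R src tgt)) *m f) i ord0.
Proof.
move=> [noloop _] conn.
have Lsym := lap_sym R src tgt.
set L := laplacian R src tgt in Lsym *.
have [mu [W HW]] := sym_spectral Lsym.
pose lam l := mu l ^+ 2.
have HM : forall k, (L *m L) ^+ k = \sum_l lam l ^+ k *: W l.
  move=> k; rewrite mulmxE -expr2 -exprM HW; apply: eq_bigr => l _.
  by rewrite /lam -exprM.
have lam0 : forall l, 0 <= lam l by move=> l; exact: sqr_ge0.
pose C := 1 + \sum_l \sum_a \sum_b `|W l a b|.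
have Cge : forall l a b, `|W l a b| <= C - 1.
  move=> l a b; rewrite /C [1 + _]addrC addrK.
  apply: (le_trans _ (le_sum1 _ _)); last first.
    by move=> j; do 2!(apply: sumr_ge0 => ? _); exact: normr_ge0.
  apply: (le_trans _ (le_sum1 _ _)); last first.
    by move=> j; apply: sumr_ge0 => ? _; exact: normr_ge0.
  by apply: (le_trans _ (le_sum1 _ _)).
have C1 : 1 <= C.
  rewrite /C lerDl; apply: sumr_ge0 => l _; do 2!(apply: sumr_ge0 => ? _); exact: normr_ge0.
pose t0 := 1 + \sum_l (n%:R * C) * (lam l)^-1.
have tm0 : forall l, 0 <= (n%:R * C) * (lam l)^-1.
  move=> l; apply: mulr_ge0; last by rewrite invr_ge0.
  apply: mulr_ge0 => //; lra.
have t0ge : forall l, (n%:R * C) * (lam l)^-1 <= t0.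
  move=> l; apply: (le_trans (le_sum1 _ tm0)); rewrite /t0 lerDr //.
have t0pos : 0 < t0.
  rewrite /t0; have : 0 <= \sum_l n%:R * C / lam l by apply: sumr_ge0 => l _; exact: tm0.
  lra.
exists t0; split => // t tt0 f f0 fn0 i.
have HA : forall k, (- t *: (L *m L)) ^+ k = \sum_l (- t * lam l) ^+ k *: W l.
  move=> k; rewrite exprZmx HM scaler_sumr; apply: eq_bigr => l _.
  by rewrite scalerA !exprMn.
rewrite (mxexp_spec HA).
pose K := \prod_(l <- index_enum 'I_n) (1 - (lam l)^-1 *: (L *m L)).
have qE : forall j, \prod_(l <- index_enum 'I_n) (1 - (lam l)^-1 * lam j) =
    if lam j == 0 then 1 else 0.
  move=> j; case: eqP => [->|/eqP nz].
    by apply: big1 => l _; rewrite mulr0 subr0.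
  by rewrite (bigD1 j) //= mulVf // subrr mul0r.
have KE : K = \sum_j (if lam j == 0 then 1 else 0) *: W j.
  have := prod_id (fun l => (lam l)^-1) (index_enum 'I_n) HM 0.
  rewrite /K expr0 mul1r => ->.
  by apply: eq_bigr => j _; rewrite expr0 mul1r qE.
have MK : (L *m L) *m K = 0.
  have := prod_id (fun l => (lam l)^-1) (index_enum 'I_n) HM 1.
  rewrite expr1 mulmxE => ->.
  apply: big1 => j _; rewrite qE expr1; case: eqP => [->|_].
    by rewrite mul0r scale0r.
  by rewrite mulr0 scale0r.
have KM : K *m (L *m L) = 0.
  by rewrite mulmxE -(prod_comm (L *m L) (fun l => (lam l)^-1)) -mulmxE MK.
pose ones := (const_mx 1 : 'cV[R]_n).
have M1 : (L *m L) *m ones = 0.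
  have Io : (incidence R src tgt)^T *m ones = 0.
    apply/matrixP => e z; rewrite [RHS]mxE.
    rewrite mxE -[RHS](subrr (1 : R)) -(inc_col (fun _ => 1) (noloop e)).
    by apply: eq_bigr => v _; rewrite !mxE.
  have Lo : L *m ones = 0 by rewrite /L /laplacian -mulmxA Io mulmx0.
  by rewrite -mulmxA Lo mulmx0.
have K1 : K *m ones = ones by exact: prod_fix.
have Msym : (L *m L)^T = L *m L by rewrite trmx_mul Lsym.
have Msym' : forall c d, (L *m L) c d = (L *m L) d c.
  by move=> c d; rewrite -{1}Msym mxE.
have colc : forall b a a', K a b = K a' b.
  move=> b a a'; have := @lap_ker R n m src tgt (\col_c K c b) noloop conn _ a a'.
  rewrite !mxE; apply.
  apply/matrixP => c z; rewrite [RHS]mxE.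
  have := congr1 (fun A : 'M[R]_n => A c b) MK; rewrite [RHS]mxE => <-.
  by rewrite !mxE; apply: eq_bigr => d _; rewrite !mxE.
have rowc : forall a b b', K a b = K a b'.
  move=> a b b'; have := @lap_ker R n m src tgt (\col_c K a c) noloop conn _ b b'.
  rewrite !mxE; apply.
  apply/matrixP => c z; rewrite [RHS]mxE.
  have := congr1 (fun A : 'M[R]_n => A a c) KM; rewrite [RHS]mxE => <-.
  rewrite !mxE; apply: eq_bigr => d _; rewrite !mxE mulrC; congr (_ * _).
  by have := Msym' c d; rewrite !mxE; exact.
have Kconst : forall a b, K a b = K i i.
  by move=> a b; rewrite (colc b a i) (rowc i b i).
have nz : n%:R != 0 :> R.
  by rewrite pnatr_eq0 -lt0n (leq_ltn_trans _ (ltn_ord i)).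
have Kii : K i i = n%:R^-1.
  have := congr1 (fun A : 'cV[R]_n => A i 0) K1; rewrite !mxE.
  under eq_bigr do rewrite Kconst mxE mulr1.
  rewrite sumr_const card_ord => H.
  by rewrite -[K i i](mulfK nz) mulr_natr H mul1r.
have npos : 0 < n%:R :> R by rewrite lt_def nz ler0n.
have nCpos : 0 < n%:R * C by apply: mulr_gt0 => //; lra.
have bnd : forall l, `|expR (- t * lam l) - (if lam l == 0 then 1 else 0)| <= (n%:R * C)^-1.
  move=> l; case: eqP => [->|/eqP lnz].
    by rewrite mulr0 expR0 subrr normr0 invr_ge0 ltW.
  rewrite subr0 ger0_norm ?expR_ge0 //.
  have lpos : 0 < lam l by rewrite lt_def lnz lam0.
  have tl : n%:R * C <= t * lam l.
    by rewrite -ler_pdivrMr //; apply: (le_trans (t0ge l)).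
  rewrite mulNr expRN lef_pV2 ?posrE ?expR_gt0 //.
  have := expR_ge1Dx (t * lam l); lra.
set E := \sum_l _.
have Epos : forall a b, 0 < E a b.
  move=> a b.
  have EK : E a b = K a b + \sum_l (expR (- t * lam l) - (if lam l == 0 then 1 else 0)) * W l a b.
    rewrite KE !summxE -big_split /=; apply: eq_bigr => l _; rewrite !mxE; set q := (if _ then _ else _); ring.
  set r := \sum_l _ in EK.
  have rlt : `|r| < n%:R^-1.
    apply: (le_lt_trans (ler_norm_sum _ _ _)).
    apply: (le_lt_trans (y := \sum_l (n%:R * C)^-1 * `|W l a b|)).
      apply: ler_sum => l _; rewrite normrM; apply: ler_wpM2r => //; exact: bnd.
    rewrite -mulr_sumr.
    have S : \sum_l `|W l a b| <= C - 1.
      rewrite /C [1 + _]addrC addrK; apply: ler_sum => l _.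
      apply: (le_trans _ (le_sum1 _ _)); last first.
        by move=> j; apply: sumr_ge0 => ? _; exact: normr_ge0.
      by apply: (le_trans _ (le_sum1 _ _)).
    have Cnz : C != 0 by rewrite gt_eqF //; lra.
    have e : (n%:R * C)^-1 * (C - 1) = n%:R^-1 - (n%:R * C)^-1.
      by rewrite mulrBr mulr1 invfM -mulrA mulVf ?mulr1.
    have ip : 0 < (n%:R * C)^-1 by rewrite invr_gt0.
    apply: (le_lt_trans (ler_wpM2l (ltW ip) S)); rewrite e; lra.
  rewrite EK Kconst Kii; move/ltr_normlP: rlt => [h1 h2]; lra.
rewrite mxE.
have [b fb] : exists b, f b 0 != 0.
  apply/existsP; apply: contraNT fn0 => /existsPn H.
  by apply/eqP/matrixP => c z; rewrite ord1 mxE; apply/eqP/negPn/H.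
have fpos : 0 < f b 0 by rewrite lt_def fb f0.
rewrite (bigD1 b) //=.
have h1 : 0 < E i b * f b 0 by apply: mulr_gt0.
have h2 : 0 <= \sum_(c | c != b) E i c * f c 0.
  by apply: sumr_ge0 => c _; apply: mulr_ge0 => //; exact: ltW.
lra.
Qed.
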